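(* Let $\bm{X},\bm{Y}\in\mathbb{R}^{n\times r}$ with $\bm{X}\bm{Y}^\top$ of rank $r$, and let $\bm{U}\bm{\Sigma}\bm{V}^\top$ be the compact SVD of $\bm{X}\bm{Y}^\top$. Then there exists an invertible $\bm{Q}\in\mathbb{R}^{r\times r}$ with $\bm{X}=\bm{U}\bm{\Sigma}^{1/2}\bm{Q}$ and $\bm{Y}=\bm{V}\bm{\Sigma}^{1/2}\bm{Q}^{-\top}$; moreover, if $\bm{U}_{\bm{Q}}\bm{\Sigma}_{\bm{Q}}\bm{V}_{\bm{Q}}^\top$ is the SVD of $\bm{Q}$, then $\|\bm{\Sigma}_{\bm{Q}}-\bm{\Sigma}_{\bm{Q}}^{-1}\|_{\mathrm{F}}\le\frac{1}{\sigma_{\min}(\bm{\Sigma})}\|\bm{X}^\top\bm{X}-\bm{Y}^\top\bm{Y}\|_{\mathrm{F}}$. In particular, if $\bm{X}^\top\bm{X}=\bm{Y}^\top\bm{Y}$ then $\bm{Q}$ is an orthogonal matrix.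
   Context: $\sigma_{\min}(\bm{\Sigma})$ denotes the smallest diagonal entry of $\bm{\Sigma}$. *)

(* Defs.v *)
(* Real numbers are modelled by an arbitrary real closed field
   R : rcfType (purely algebraic statement; needs square roots only). *)
From HB Require Import structures.
From mathcomp Require Import all_boot all_order all_algebra.
Set Implicit Arguments. Unset Strict Implicit. Unset Printing Implicit Defensive.
Import Order.TTheory GRing.Theory Num.Theory.
Local Open Scope ring_scope.

Definition frob (R : rcfType) m n (A : 'M[R]_(m, n)) : R :=
  Num.sqrt (\sum_(i < m) \sum_(j < n) A i j ^+ 2).

Definition orthonormal_cols (R : rcfType) m n (A : 'M[R]_(m, n)) : Prop :=
  A^T *m A = 1%:M.

Definition orthogonal_mx (R : rcfType) n (A : 'M[R]_n) : Prop :=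
  A^T *m A = 1%:M /\ A *m A^T = 1%:M.

Definition sv_diag (R : rcfType) r (S : 'M[R]_r) : Prop :=
  is_diag_mx S /\ (forall i : 'I_r, 0 <= S i i) /\
  (forall i j : 'I_r, (i <= j)%N -> S j j <= S i i).

Definition compact_svd (R : rcfType) m n r (A : 'M[R]_(m, n))
  (U : 'M[R]_(m, r)) (S : 'M[R]_r) (V : 'M[R]_(n, r)) : Prop :=
  orthonormal_cols U /\ orthonormal_cols V /\ sv_diag S /\
  (forall i : 'I_r, 0 < S i i) /\ A = U *m S *m V^T.

Definition svd_sq (R : rcfType) r (Q UQ SQ VQ : 'M[R]_r) : Prop :=
  orthogonal_mx UQ /\ orthogonal_mx VQ /\ sv_diag SQ /\ Q = UQ *m SQ *m VQ^T.

Definition diag_sqrt (R : rcfType) r (S : 'M[R]_r) : 'M[R]_r :=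
  diag_mx (\row_i Num.sqrt (S i i)).

Definition sigma_min (R : rcfType) r (S : 'M[R]_r.+1) : R :=
  \big[Order.min/S 0 0]_(i < r.+1) S i i.

(* Main.v *)
Require Import Defs.
From HB Require Import structures.
From mathcomp Require Import all_boot all_order all_algebra ring lra.
Import Order.TTheory GRing.Theory Num.Theory.
Local Open Scope ring_scope.

Section Helpers.
Set Implicit Arguments. Unset Strict Implicit. Unset Printing Implicit Defensive.

Variable R : rcfType.

Definition sumsq m n (A : 'M[R]_(m, n)) := \sum_i \sum_j A i j ^+ 2.

Lemma tr_AAt m n (A : 'M[R]_(m, n)) : \tr (A *m A^T) = sumsq A.
Proof.
rewrite /sumsq /mxtrace; apply: eq_bigr => i _; rewrite mxE.
by apply: eq_bigr => j _; rewrite mxE expr2.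
Qed.

Lemma sumsq_ge0 m n (A : 'M[R]_(m, n)) : 0 <= sumsq A.
Proof. by apply: sumr_ge0 => i _; apply: sumr_ge0 => j _; apply: sqr_ge0. Qed.

Lemma sumsq_eq0 m n (A : 'M[R]_(m, n)) : sumsq A = 0 -> A = 0.
Proof.
move=> H; apply/matrixP => i j; rewrite mxE.
have Hi : \sum_j A i j ^+ 2 = 0.
  apply: (psumr_eq0P _ H) => // k _; apply: sumr_ge0 => l _; exact: sqr_ge0.
have := psumr_eq0P (fun j _ => sqr_ge0 (A i j)) Hi (i := j) isT.
by move/eqP; rewrite sqrf_eq0 => /eqP.
Qed.

Lemma frob_sumsq m n (A : 'M[R]_(m, n)) : frob A = Num.sqrt (sumsq A).
Proof. by []. Qed.

Lemma sumsq_orth n (V B : 'M[R]_n) : orthogonal_mx V ->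
  sumsq (V *m B *m V^T) = sumsq B.
Proof.
case=> H1 H2; rewrite -!tr_AAt !trmx_mul trmxK.
rewrite -!mulmxA (mulmxA V^T V) H1 mul1mx.
by rewrite mxtrace_mulC -!mulmxA H1 mulmx1.
Qed.

Lemma invmx_of n (A B : 'M[R]_n) : A *m B = 1%:M -> invmx A = B.
Proof.
move=> H; have [uA _] := mulmx1_unit H.
by rewrite -[invmx A]mulmx1 -H mulmxA mulVmx // mul1mx.
Qed.

Lemma diag_of n (S : 'M[R]_n) : is_diag_mx S -> S = diag_mx (\row_i S i i).
Proof.
move/is_diag_mxP=> H; apply/matrixP => i j; rewrite !mxE.
case: (eqVneq i j) => [->|ne]; first by rewrite mulr1n.
by rewrite mulr0n H.
Qed.




Lemma sumsqB n (A B : 'M[R]_n) :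
  sumsq (A - B) = \tr (A *m A^T) - \tr (A *m B^T) - \tr (B *m A^T) + \tr (B *m B^T).
Proof.
rewrite -tr_AAt linearB /= mulmxBl !mulmxBr !linearB /=.
rewrite opprB; ring.
Qed.


Lemma ar1 (a b : R) : a - b - b + a = 2%:R * (a - b).
Proof. ring. Qed.
Lemma orth_of n (Q T Ti : 'M[R]_n) : Q \in unitmx -> T^T = T -> Ti^T = Ti ->
  T *m Ti = 1%:M -> Ti *m T = 1%:M ->
  Q^T *m (T *m T) *m Q = invmx Q *m (T *m T) *m (invmx Q)^T -> orthogonal_mx Q.
Proof.
move=> uQ Tt Tit TTi TiT.
move Sd: (T *m T) => S; move Wd: (invmx Q) => W => E.
have QW : Q *m W = 1%:M by rewrite -Wd mulmxV.
have WQ : W *m Q = 1%:M by rewrite -Wd mulVmx.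
have WtQt : W^T *m Q^T = 1%:M by rewrite -trmx_mul QW trmx1.
have QtWt : Q^T *m W^T = 1%:M by rewrite -trmx_mul WQ trmx1.
move Pd: (Q *m Q^T) => P.
have Pt : P^T = P by rewrite -Pd trmx_mul trmxK.
have PSP : P *m S *m P = S.
  rewrite -Pd -!mulmxA (mulmxA Q^T) (mulmxA _ Q) E.
  by rewrite !mulmxA QW mul1mx -mulmxA WtQt mulmx1.
pose C := Ti *m P *m T.
have CCt : C *m C^T = 1%:M.
  rewrite /C !trmx_mul Tt Tit Pt.
  rewrite -!mulmxA (mulmxA T T) Sd (mulmxA S P) (mulmxA P (S *m P)) (mulmxA P S P) PSP.
  by rewrite -Sd -!mulmxA TTi mulmx1 TiT.
have trC : \tr C = \tr P.
  by rewrite /C mxtrace_mulC mulmxA TTi mul1mx.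
have WtWS : W^T *m W *m S = S *m P.
  have h1 : W^T *m (Q^T *m S *m Q) = S *m Q by rewrite !mulmxA WtQt mul1mx.
  rewrite E !mulmxA in h1.
  by rewrite -Pd mulmxA -h1 -!mulmxA WtQt mulmx1.
have trW : \tr (W^T *m W) = \tr P.
  have -> : W^T *m W = S *m P *m (Ti *m Ti).
    by rewrite -WtWS -Sd -!mulmxA (mulmxA T Ti) TTi mul1mx TTi mulmx1.
  by rewrite -Sd mxtrace_mulC -!mulmxA (mulmxA Ti T) TiT mul1mx (mulmxA Ti T) TiT mul1mx.
have h1 : sumsq (Q - W^T) = 2%:R * (\tr P - \tr (1%:M : 'M[R]_n)).
  rewrite sumsqB trmxK QW WtQt Pd trW !mxtrace1.
  exact: ar1.
have h2 : sumsq (C - 1%:M) = 2%:R * (\tr (1%:M : 'M[R]_n) - \tr P).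
  rewrite sumsqB trmx1 CCt mulmx1 mul1mx mulmx1 mxtrace_tr trC !mxtrace1; exact: ar1.
have h3 : sumsq (Q - W^T) = 0.
  apply/eqP; rewrite eq_le sumsq_ge0 andbT.
  have := sumsq_ge0 (C - 1%:M); rewrite h1 h2 => h; lra.
have QWt : Q = W^T by apply/eqP; rewrite -subr_eq0; apply/eqP/sumsq_eq0.
by split; [rewrite {1}QWt trmxK WQ | rewrite {2}QWt trmxK QW].
Qed.




Lemma scal (s m d e : R) : 0 < s -> s <= m -> 0 < d -> d * e = 1 ->
  (d - e) ^+ 2 <= s^-1 ^+ 2 * (m * (d ^+ 2 - e ^+ 2)) ^+ 2.
Proof.
move=> s0 sm d0 de.
have e0 : 0 < e by nra.
have k : s ^+ 2 * (d - e) ^+ 2 <= (m * (d ^+ 2 - e ^+ 2)) ^+ 2.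
  have -> : (m * (d ^+ 2 - e ^+ 2)) ^+ 2 = m ^+ 2 * (d + e) ^+ 2 * (d - e) ^+ 2 by ring.
  apply: ler_wpM2r; first exact: sqr_ge0.
  have h1 : s ^+ 2 <= m ^+ 2 by nra.
  have h2 : 1 <= (d + e) ^+ 2 by nra.
  nra.
rewrite exprVn mulrC ler_pdivlMr ?exprn_gt0 // mulrC; exact: k.
Qed.


Lemma sumsq_diag n (d : 'rV[R]_n) : sumsq (diag_mx d) = \sum_i d 0 i ^+ 2.
Proof.
apply: eq_bigr => i _; rewrite (bigD1 i) //= big1 => [|j ji].
  by rewrite !mxE eqxx mulr1n addr0.
by rewrite !mxE eq_sym (negbTE ji) mulr0n expr0n.
Qed.

Lemma sumsq_ge_diag n (B : 'M[R]_n) : \sum_i B i i ^+ 2 <= sumsq B.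
Proof.
apply: ler_sum => i _; rewrite (bigD1 i) //= lerDl.
by apply: sumr_ge0 => j _; apply: sqr_ge0.
Qed.

Lemma diag_conj_ii n (d : 'rV[R]_n) (M : 'M[R]_n) i :
  (diag_mx d *m M *m diag_mx d) i i = M i i * d 0 i ^+ 2.
Proof. by rewrite mul_mx_diag mxE mul_diag_mx mxE mulrAC mulrC expr2. Qed.

Lemma ineq_of n (Q UQ D VQ : 'M[R]_n) (s : 'rV[R]_n) (sg : R) :
  Q \in unitmx -> 0 < sg -> (forall k, sg <= s 0 k) -> svd_sq Q UQ D VQ ->
  frob (D - invmx D) <= sg^-1 *
    frob (Q^T *m diag_mx s *m Q - invmx Q *m diag_mx s *m (invmx Q)^T).
Proof.
move=> uQ sg0 hs [[U1 U2] [[V1 V2] [[Ddiag [Dge0 _]] QE]]].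
have DE := diag_of Ddiag.
have uD : D \in unitmx.
  by move: uQ; rewrite QE !unitmx_mul => /andP[/andP[_ h] _].
have Dnz : forall i, D i i != 0.
  move=> i; move: uD; rewrite {1}DE unitmxE det_diag unitfE => /prodf_neq0 H.
  by have := H i isT; rewrite mxE.
have Dpos : forall i, 0 < D i i by move=> i; rewrite lt_def Dnz Dge0.
pose e := \row_i (D i i)^-1.
have DEi : invmx D = diag_mx e.
  apply: invmx_of; rewrite {1}DE mulmx_diag -diag_const_mx; congr diag_mx.
  by apply/matrixP => i j; rewrite !mxE divff.
have WQ : invmx Q = VQ *m diag_mx e *m UQ^T.
  apply: invmx_of; rewrite QE -!mulmxA (mulmxA VQ^T VQ) V1 mul1mx.
  by rewrite -DEi (mulmxA D) mulmxV // mul1mx U2.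
pose M := UQ^T *m diag_mx s *m UQ.
have Dt : D^T = D by rewrite {1 2}DE tr_diag_mx.
have Et : (diag_mx e)^T = diag_mx e by rewrite tr_diag_mx.
have Bexp : Q^T *m diag_mx s *m Q - invmx Q *m diag_mx s *m (invmx Q)^T =
   VQ *m (D *m M *m D - diag_mx e *m M *m diag_mx e) *m VQ^T.
  rewrite WQ QE !trmx_mul !trmxK Dt Et mulmxBr mulmxBl.
  by congr (_ - _); rewrite /M !mulmxA.
rewrite Bexp !frob_sumsq sumsq_orth; last by split.
set B := D *m M *m D - _.
have sgi : 0 <= sg^-1 by rewrite invr_ge0 ltW.
rewrite -[sg^-1](@ger0_norm _ sg^-1) // -sqrtr_sqr -sqrtrM ?sqr_ge0 //.
apply: ler_wsqrtr.
have DmE : D - invmx D = diag_mx (\row_i (D i i - (D i i)^-1)).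
  by rewrite DEi {1}DE; apply/matrixP => i j; rewrite !mxE mulrnBl.
rewrite DmE sumsq_diag.
apply: (le_trans _ (ler_wpM2l (sqr_ge0 _) (sumsq_ge_diag B))).
rewrite mulr_sumr; apply: ler_sum => i _.
have Bii : B i i = M i i * (D i i ^+ 2 - (D i i)^-1 ^+ 2).
  have -> : B i i = (D *m M *m D) i i - (diag_mx e *m M *m diag_mx e) i i.
    by rewrite /B !mxE.
  by rewrite diag_conj_ii {1 2}DE diag_conj_ii !mxE mulrBr.
have Mii : sg <= M i i.
  have h : (UQ^T *m UQ) i i = 1 by rewrite U1 mxE eqxx.
  rewrite -[sg]mulr1 -h /M mul_mx_diag !mxE mulr_sumr; apply: ler_sum => k _.
  rewrite !mxE; have := hs k; have := sqr_ge0 (UQ k i); nra.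
rewrite Bii mxE; apply: (scal sg0 Mii (Dpos i)); exact: divff.
Qed.

End Helpers.

Theorem lemma20 (R : rcfType) (n r : nat) (X Y : 'M[R]_(n, r.+1))
  (U : 'M[R]_(n, r.+1)) (S : 'M[R]_r.+1) (V : 'M[R]_(n, r.+1)) :
  \rank (X *m Y^T) = r.+1 ->
  compact_svd (X *m Y^T) U S V ->
  exists Q : 'M[R]_r.+1,
    Q \in unitmx /\
    X = U *m diag_sqrt S *m Q /\
    Y = V *m diag_sqrt S *m (invmx Q)^T /\
    (forall UQ SQ VQ : 'M[R]_r.+1, svd_sq Q UQ SQ VQ ->
       frob (SQ - invmx SQ) <= (sigma_min S)^-1 * frob (X^T *m X - Y^T *m Y)) /\
    (X^T *m X = Y^T *m Y -> orthogonal_mx Q).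
Proof.
move=> _ [U1 [V1 [[Sdiag [Sge0 _]] [Spos XYE]]]].
have SE := diag_of Sdiag.
pose T := diag_mx (\row_i Num.sqrt (S i i)).
pose Ti := diag_mx (\row_i (Num.sqrt (S i i))^-1).
have sqpos : forall i, 0 < Num.sqrt (S i i) by move=> i; rewrite sqrtr_gt0.
have TT : T *m T = S.
  rewrite [RHS]SE mulmx_diag; congr diag_mx; apply/matrixP => i j.
  by rewrite !mxE -expr2 sqr_sqrtr // ltW.
have TTi : T *m Ti = 1%:M.
  rewrite mulmx_diag -diag_const_mx; congr diag_mx; apply/matrixP => i j.
  by rewrite !mxE divff // gt_eqF.
have TiT : Ti *m T = 1%:M.
  rewrite mulmx_diag -diag_const_mx; congr diag_mx; apply/matrixP => i j.
  by rewrite !mxE mulVf // gt_eqF.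
have Tt : T^T = T by rewrite tr_diag_mx.
have Tit : Ti^T = Ti by rewrite tr_diag_mx.
have DS : diag_sqrt S = T by [].
clearbody T Ti.
have uT : T \in unitmx by have [h _] := mulmx1_unit TTi.
have uS : S \in unitmx by rewrite -TT unitmx_mul uT.
pose K := Y^T *m V.
have XK : X *m K = U *m S by rewrite /K mulmxA XYE -mulmxA V1 mulmx1.
clearbody K.
have SK : S = (U^T *m X) *m K by rewrite -mulmxA XK mulmxA U1 mul1mx.
have uK : K \in unitmx by move: uS; rewrite {1}SK unitmx_mul => /andP[_ h].
have XE : X = U *m S *m invmx K by rewrite -XK mulmxK.
have h : S *m invmx K *m Y^T = S *m V^T.
  have h0 : U^T *m (X *m Y^T) = S *m V^T by rewrite XYE !mulmxA U1 mul1mx.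
  by rewrite {1}XE !mulmxA U1 mul1mx in h0.
have h2 : invmx K *m Y^T = V^T.
  by rewrite -[invmx K *m Y^T](mulKmx uS) (mulmxA S) h mulKmx.
have Yt : Y^T = K *m V^T by rewrite -h2 mulKVmx.
have YE : Y = V *m K^T by rewrite -[Y]trmxK Yt trmx_mul trmxK.
pose Q := T *m invmx K.
have uQ : Q \in unitmx by rewrite unitmx_mul uT unitmx_inv.
have XQ : X = U *m T *m Q by rewrite {1}XE -TT /Q !mulmxA.
have WQ : invmx Q = K *m Ti.
  by apply: invmx_of; rewrite /Q -!mulmxA (mulmxA (invmx K)) mulVmx // mul1mx TTi.
clearbody Q.
have YQ : Y = V *m T *m (invmx Q)^T.
  by rewrite WQ trmx_mul Tit mulmxA -(mulmxA V T Ti) TTi mulmx1 YE.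
have XtX : X^T *m X = Q^T *m (T *m T) *m Q.
  by rewrite XQ !trmx_mul Tt !mulmxA -(mulmxA (Q^T *m T) U^T U) U1 mulmx1.
have YtY : Y^T *m Y = invmx Q *m (T *m T) *m (invmx Q)^T.
  by rewrite YQ !trmx_mul trmxK Tt !mulmxA -(mulmxA (invmx Q *m T) V^T V) V1 mulmx1.
exists Q; split; first exact: uQ.
split; first by rewrite DS.
split; first by rewrite DS.
split.
  move=> UQ SQ VQ hsvd.
  have sg0 : 0 < sigma_min S.
    by rewrite /sigma_min; apply: lt_bigmin => // i _; apply: Spos.
  have hs : forall k, sigma_min S <= (\row_i S i i) 0 k.
    by move=> k; rewrite mxE; apply: bigmin_le.
  have := ineq_of uQ sg0 hs hsvd.
  by rewrite -SE XtX YtY TT.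
move=> E; apply: (orth_of uQ Tt Tit TTi TiT).
by rewrite -XtX -YtY.
Qed.
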